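(* Let $\mathsf{K}$ be a free simplicial $\mathbb{Z}_2$-complex with $\operatorname{ind}(\mathsf{K})=n-1$, and let $\lambda_1,\ldots,\lambda_m$ be Fan labelings of $\mathsf{K}$ with labels in $\{\pm1,\ldots,\pm N\}$. For any choice of positive integers $\ell_1,\ldots,\ell_N$ with $\ell_1+\cdots+\ell_N=m+N-1$, there exist a simplex $\sigma=\langle v_1,\ldots,v_n\rangle$ of $\mathsf{K}$ (with vertices $v_1,\ldots,v_n$), integers $1\le j_1\le\cdots\le j_n\le N$, and indices $i_1,\ldots,i_n\in[m]$ such that: (a) $\lambda_{i_k}(v_k)=(-1)^k j_k$ for each $k\in[n]$; (b) for each $k\ge2$, if $j_{k-1}=j_k$ then $i_{k-1}<i_k$; (c) for each $k\in[n]$, the label $+j_k$ or the label $-j_k$ is present on the vertices of $\sigma$ in at least $\ell_{j_k}$ of the labelings $\lambda_1,\ldots,\lambda_m$.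
   Context: A free simplicial $\mathbb{Z}_2$-complex is a simplicial complex with a free simplicial $\mathbb{Z}_2$-action. A Fan labeling is a labeling of its vertices by non-zero integers such that (i) no two adjacent vertices have labels summing to zero, and (ii) the two vertices of any orbit have labels summing to zero. The $\mathbb{Z}_2$-index $\operatorname{ind}(\mathsf{K})$ is the minimal $d$ such that there is a continuous map from $\mathsf{K}$ to $\mathcal{S}^d$ commuting with the $\mathbb{Z}_2$-actions (antipodal map on $\mathcal{S}^d$). *)

(* Defs.v *)
From HB Require Import structures.
From mathcomp Require Import all_boot all_order all_algebra.
From mathcomp Require Import all_classical all_reals topology normedtype.
From mathcomp Require Import Rstruct Rstruct_topology.
Set Implicit Arguments. Unset Strict Implicit. Unset Printing Implicit Defensive.
Import Order.TTheory GRing.Theory Num.Theory.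
Local Open Scope ring_scope.

Notation RR := Rdefinitions.R.

Definition simplicial_complex (p : nat) (K : {set {set 'I_p}}) : Prop :=
  finset.set0 \in K /\
  (forall s t : {set 'I_p}, s \in K -> t \subset s -> t \in K) /\
  (forall v : 'I_p, [set v] \in K).

(* nu is a free simplicial Z2-action on K: an involution mapping simplices
   to simplices and fixing no nonempty simplex (equivalently, the induced
   action on the geometric realization has no fixed point). *)
Definition free_Z2_action (p : nat) (K : {set {set 'I_p}}) (nu : 'I_p -> 'I_p)
  : Prop :=
  (forall v, nu (nu v) = v) /\
  (forall s, s \in K -> nu @: s \in K) /\
  (forall s, s \in K -> s != finset.set0 -> nu @: s != s).

Definition fan_labeling (p : nat) (K : {set {set 'I_p}}) (nu : 'I_p -> 'I_p)
  (lam : 'I_p -> int) : Prop :=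
  (forall v, lam v != 0) /\
  (forall u v, u != v -> [set u; v] \in K -> lam u + lam v != 0) /\
  (forall v, lam (nu v) = - lam v).

(* Geometric realization |K| inside R^p (barycentric coordinates). *)
Definition realization (p : nat) (K : {set {set 'I_p}}) : set 'rV[RR]_p :=
  fun x => (forall i, 0 <= x ord0 i) /\ \sum_i x ord0 i = 1 /\
           [set i | x ord0 i != 0] \in K.

Definition Z2act (p : nat) (nu : 'I_p -> 'I_p) (x : 'rV[RR]_p) : 'rV[RR]_p :=
  \row_i x ord0 (nu i).

Definition on_sphere (d : nat) (y : 'rV[RR]_d) : Prop :=
  \sum_j y ord0 j ^+ 2 = 1.

Definition equivariant_sphere_map (p : nat) (K : {set {set 'I_p}})
  (nu : 'I_p -> 'I_p) (d : nat) : Prop :=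
  exists f : 'rV[RR]_p -> 'rV[RR]_d,
    ({within realization K, continuous f})%classic /\
    (forall x, realization K x -> on_sphere (f x)) /\
    (forall x, realization K x -> f (Z2act nu x) = - f x).

(* ind(K) = n - 1 : the minimal dimension of a sphere receiving an
   equivariant map is n - 1 (S^(n-1) lives in R^n). *)
Definition Z2_index_is_pred (p : nat) (K : {set {set 'I_p}})
  (nu : 'I_p -> 'I_p) (n : nat) : Prop :=
  equivariant_sphere_map K nu n /\
  (forall d : nat, (d < n)%N -> ~ equivariant_sphere_map K nu d).

(* Main.v *)
Require Import Defs.
From HB Require Import structures.
From mathcomp Require Import all_boot all_order all_algebra.
From mathcomp Require Import all_classical all_reals topology normedtype.
From mathcomp Require Import Rstruct Rstruct_topology realfun.
From mathcomp Require Import zify ring lra.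
Import Order.TTheory GRing.Theory Num.Theory.
Local Open Scope ring_scope.
Set Implicit Arguments. Unset Strict Implicit. Unset Printing Implicit Defensive.

Section Key.
Variables (R : realFieldType) (V : finType) (L : V -> int).

Definition altr : rel V := fun u w =>
  ((absz (L u) < absz (L w))%N && ((L u < 0) != (L w < 0))).

Lemma abs_opp_sum (a b : int) : absz a = absz b -> (a < 0) != (b < 0) -> a + b = 0.
Proof. lia. Qed.

Lemma nat_aux2 a k : (k < a.+1)%N -> (a.+2 <= k.+1)%N -> False.
Proof. lia. Qed.

Lemma nat_aux3 a k : (k < a.+1)%N -> (a.+3 <= k.+1)%N -> False.
Proof. lia. Qed.

Lemma sgn_opp_neg (a b : int) : a != 0 -> b != 0 -> (a < 0) != (b < 0) ->
  ((a%:~R : R) * b%:~R < 0).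
Proof.
move=> a0 b0 ab; rewrite -rmorphM /= ltrz0; lia.
Qed.

Lemma sgn_same_pos (a b : int) : a != 0 -> b != 0 -> (a < 0) = (b < 0) ->
  (0 < (a%:~R : R) * b%:~R).
Proof.
move=> a0 b0 ab; rewrite -rmorphM /= ltr0z; lia.
Qed.

Lemma key (k : nat) : forall (S : {set V}) (vs : V), vs \in S ->
  (forall v, v \in S -> (absz (L v) <= absz (L vs))%N) ->
  (forall u v, u \in S -> v \in S -> L u + L v != 0) ->
  (forall l, all (mem S) l -> sorted altr l -> (size l <= k)%N) ->
  exists P : {poly R}, (size P <= k)%N /\
    (forall v, v \in S -> 0 < (L v)%:~R * P.[(absz (L v))%:R]) /\
    (forall t : R, (absz (L vs))%:R <= t -> 0 < (L vs)%:~R * P.[t]).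
Proof.
elim: k => [|k IH] S vs vsS vsmax cons alt.
  by have := alt [:: vs]; rewrite /= vsS => /(_ isT isT).
have nz v : v \in S -> L v != 0.
  by move=> vS; have := cons v v vS vS; apply: contraNneq => ->.
have [opp|] := boolP [exists u in S, (L u < 0) != (L vs < 0)]; last first.
  rewrite negb_exists => /forallP same.
  exists (L vs)%:~R%:P; split; first by rewrite (leq_trans (size_polyC_leq1 _)).
  split=> [v vS|t _]; rewrite hornerC.
    apply: sgn_same_pos; [exact: nz|exact: nz|].
    by have := same v; rewrite vS /= => /negPn/eqP.
  by apply: sgn_same_pos; [exact: nz|exact: nz|].
set D := [set u in S | (L u < 0) != (L vs < 0)].
have [u0 u0D] : exists u0, u0 \in D.
  by case/existsP: opp => u /andP[uS uo]; exists u; rewrite inE uS.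
pose us := [arg max_(u > u0 in D) absz (L u)].
have [usD usmax] : us \in D /\ forall u, u \in D -> (absz (L u) <= absz (L us))%N.
  by rewrite /us; case: arg_maxnP.
move: usD; rewrite inE => /andP[usS usopp].
set T := absz (L us).
have Tlt : (T < absz (L vs))%N.
  rewrite ltn_neqAle vsmax // andbT; apply/negP=> /eqP Te.
  by move/eqP: (cons us vs usS vsS); apply; apply: abs_opp_sum.
set S' := [set v in S | (absz (L v) <= T)%N].
have usS' : us \in S' by rewrite inE usS leqnn.
have [P [sP [P1 P2]]] : exists P : {poly R}, (size P <= k)%N /\
    (forall v, v \in S' -> 0 < (L v)%:~R * P.[(absz (L v))%:R]) /\
    (forall t : R, (absz (L us))%:R <= t -> 0 < (L us)%:~R * P.[t]).
  apply: IH => //.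
  - by move=> v; rewrite inE => /andP[].
  - by move=> u v; rewrite !inE => /andP[uS _] /andP[vS _]; apply: cons.
  move=> [|x l] //= /andP[xS' allS'] pl; rewrite leqNgt; apply/negP => szl.
  set w := last x l.
  have wS' : w \in S'.
    rewrite /w; move: allS'; case: (lastP l) => [|l' y] //.
    by rewrite last_rcons all_rcons => /andP[].
  move: (wS'); rewrite inE => /andP[wS wT].
  have allS : all (mem S) (x :: l).
    rewrite /= (_ : x \in S) ?(sub_all _ allS') //.
      by move=> y; rewrite /= inE => /andP[].
    by move: xS'; rewrite inE => /andP[].
  have [wsame|wopp] := eqVneq (L w < 0) (L vs < 0).
    have wTs : (absz (L w) < T)%N.
      rewrite ltn_neqAle wT andbT; apply/negP => /eqP wTe.
      move/eqP: (cons w us wS usS); apply; apply: abs_opp_sum => //.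
      by rewrite wsame eq_sym.
    have A1 : all (mem S) (rcons (rcons (x :: l) us) vs).
      by rewrite !all_rcons allS !andbT; apply/andP; split.
    have A2 : sorted altr (rcons (rcons (x :: l) us) vs).
      rewrite /= !rcons_path pl !last_rcons -/w /altr wTs Tlt usopp /= andbT.
      by rewrite wsame eq_sym.
    have := alt _ A1 A2; rewrite !size_rcons /=; exact: nat_aux3 szl.
  have A1 : all (mem S) (rcons (x :: l) vs).
    by rewrite !all_rcons allS !andbT.
  have A2 : sorted altr (rcons (x :: l) vs).
    by rewrite /= !rcons_path pl -/w /altr wopp (leq_ltn_trans wT Tlt).
  have := alt _ A1 A2; rewrite !size_rcons /=; exact: nat_aux2 szl.
exists (P * ((T%:R + 2^-1)%:P - 'X)); split.
  apply: (leq_trans (size_polyMleq _ _)).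
  by rewrite -opprB size_opp size_XsubC addn2 /= ltnS.
have hi v t : v \in S -> (L v < 0) = (L vs < 0) -> T%:R <= t ->
    (T%:R + 1 <= t) -> 0 < (L v)%:~R * (P * ((T%:R + 2^-1)%:P - 'X)).[t].
  move=> vS vsame Tt T1t; rewrite hornerM hornerD hornerN hornerC hornerX.
  have h1 := P2 t Tt.
  have h2 : (L v)%:~R * (L us)%:~R < 0 :> R.
    by apply: sgn_opp_neg; [exact: nz|exact: nz|rewrite vsame eq_sym].
  have h3 : (L v)%:~R * P.[t] < 0 :> R by nra.
  have h4 : T%:R + 2^-1 - t < 0 :> R.
    have : (2^-1 : R) < 1 by rewrite invf_lt1 // ltr1n.
    lra.
  rewrite mulrA nmulr_rgt0 //.
split.
  move=> v vS; case: (leqP (absz (L v)) T) => vT.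
    have vS' : v \in S' by rewrite inE vS vT.
    rewrite hornerM hornerD hornerN hornerC hornerX mulrA pmulr_lgt0 ?P1 //.
    have : (absz (L v))%:R <= T%:R :> R by rewrite ler_nat.
    have : (0 : R) < 2^-1 by rewrite invr_gt0 ltr0n.
    lra.
  have vsame : (L v < 0) = (L vs < 0).
    have [//|vo] := eqVneq (L v < 0) (L vs < 0).
    have := usmax v; rewrite inE vS vo => /(_ isT).
    by rewrite leqNgt vT.
  apply: hi => //; first by rewrite ler_nat ltnW.
  by rewrite natr1 ler_nat.
move=> t vst; apply: hi => //.
  by rewrite (le_trans _ vst) // ler_nat ltnW.
by rewrite (le_trans _ vst) // natr1 ler_nat.
Qed.

End Key.

Section T.
Variables (p d : nat).
Lemma Fcont (w : 'I_p -> 'rV[RR]_d) :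
  continuous (fun x : 'rV[RR]_p => \sum_v x ord0 v *: w v).
Proof.
apply: continuous_big; first exact: add_continuous.
move=> v _ x; apply: continuousZr_tmp; exact: coord_continuous.
Qed.
Lemma cont_sumR (T : topologicalType) (I : Type) (r : seq I) (G : I -> T -> RR) x :
  (forall i, {for x, continuous (G i)}) ->
  {for x, continuous (fun y => \sum_(i <- r) G i y)}.
Proof.
move=> Gc; elim: r => [|i r IH].
  have -> : (fun y => \sum_(i <- [::]) G i y) = (fun=> 0) by apply/funext => y; rewrite big_nil.
  exact: cst_continuous.
have -> : (fun y => \sum_(j <- i :: r) G j y) = (fun y => G i y + \sum_(j <- r) G j y).
  by apply/funext => y; rewrite big_cons.
rewrite /prop_for /continuous_at.
have H := @cvgD RR RR^o T (nbhs x) _ (G i) (fun y => \sum_(j <- r) G j y) _ _ (Gc i) IH.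
exact: H.
Qed.

Lemma nFcont : continuous (fun y : 'rV[RR]_d => \sum_j y ord0 j ^+ 2).
Proof.
move=> y; apply: cont_sumR => j.
apply: (@continuous_comp _ _ _ (fun y : 'rV[RR]_d => y ord0 j) (fun r => r ^+ 2)).
  exact: coord_continuous.
exact: exprn_continuous.
Qed.
End T.

Lemma sphere_map p d (K : {set {set 'I_p}}) (nu : 'I_p -> 'I_p) (L : 'I_p -> int) :
  (forall v, nu (nu v) = v) ->
  (forall v, L (nu v) = - L v) ->
  (forall s, s \in K -> forall u v, u \in s -> v \in s -> L u + L v != 0) ->
  (forall s, s \in K -> forall l, all (mem s) l -> sorted (altr L) l -> (size l <= d)%N) ->
  equivariant_sphere_map K nu d.
Proof.
move=> nuK Lnu cons noalt.
pose w := fun v : 'I_p => \row_(j < d) ((L v)%:~R * ((absz (L v))%:R ^+ j) : RR).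
pose F := fun x : 'rV[RR]_p => \sum_v x ord0 v *: w v.
pose nF := fun y : 'rV[RR]_d => \sum_j y ord0 j ^+ 2.
pose f := fun x => (Num.sqrt (nF (F x)))^-1 *: F x.
have nF_ge0 y : 0 <= nF y by apply: sumr_ge0 => j _; exact: sqr_ge0.
have nF_pos : forall x, realization K x -> 0 < nF (F x).
  move=> x [x0 [xs xK]].
  set sg := [set i | x ord0 i != 0] in xK.
  have [v0 v0s] : exists v0, v0 \in sg.
    case: (set_0Vmem sg) => [s0|[v1 v1s]]; last by exists v1.
    have xz i : x ord0 i = 0.
      apply/eqP; apply: contraT => xi.
      have H : i \in sg by rewrite /sg inE.
      by rewrite s0 inE in H.
    by move: xs; rewrite big1 // => /eqP; rewrite eq_sym oner_eq0.
  pose vs := [arg max_(v > v0 in sg) absz (L v)].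
  have [vss vsmax] : vs \in sg /\ forall v, v \in sg -> (absz (L v) <= absz (L vs))%N.
    by rewrite /vs; case: arg_maxnP.
  have [P [sP [P1 _]]] := @key RR _ L d sg vs vss vsmax (cons _ xK) (noalt _ xK).
  have xpos v : v \in sg -> 0 < x ord0 v.
    by rewrite /sg inE => xv; rewrite lt_def xv x0.
  have E : \sum_(j < d) P`_j * F x ord0 j =
           \sum_v x ord0 v * ((L v)%:~R * P.[(absz (L v))%:R]).
    rewrite /F; under eq_bigr do rewrite summxE mulr_sumr.
    rewrite exchange_big; apply: eq_bigr => v _.
    rewrite (horner_coef_wide _ sP) !mulr_sumr; apply: eq_bigr => j _.
    rewrite !mxE; ring.
  have Epos : 0 < \sum_(j < d) P`_j * F x ord0 j.
    rewrite E (bigD1 vs) //=.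
    have h1 : 0 < x ord0 vs * ((L vs)%:~R * P.[(absz (L vs))%:R]).
      by rewrite mulr_gt0 ?xpos ?P1.
    have h2 : 0 <= \sum_(v | v != vs) x ord0 v * ((L v)%:~R * P.[(absz (L v))%:R]).
      apply: sumr_ge0 => v _.
      case: (boolP (v \in sg)) => vsg; first by rewrite mulr_ge0 ?x0 // ltW ?P1.
      by move: vsg; rewrite /sg inE negbK => /eqP ->; rewrite mul0r.
    lra.
  rewrite lt_def nF_ge0 andbT; apply/eqP => nF0.
  have Fz j : F x ord0 j = 0.
    have := (psumr_eq0P (fun j _ => sqr_ge0 (F x ord0 j)) nF0) j isT.
    by move/eqP; rewrite sqrf_eq0 => /eqP.
  by move: Epos; rewrite big1 ?ltxx // => j _; rewrite Fz mulr0.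
have wnu v : w (nu v) = - w v.
  by apply/rowP => j; rewrite !mxE Lnu abszN rmorphN /= mulNr.
have Fnu x : F (Z2act nu x) = - F x.
  rewrite /F /Z2act; under eq_bigr do rewrite mxE.
  rewrite (reindex_inj (can_inj nuK)) /= -sumrN; apply: eq_bigr => v _.
  by rewrite nuK wnu scalerN.
have nFN y : nF (- y) = nF y.
  by apply: eq_bigr => j _; rewrite mxE sqrrN.
exists f; split; [|split].
- apply: continuous_in_subspaceT => x; rewrite inE => /nF_pos np.
  rewrite /f; apply: (@continuousZ RR _ _ (fun x => (Num.sqrt (nF (F x)))^-1) F x); last exact: Fcont.
  apply: continuousV; first by rewrite gt_eqF // sqrtr_gt0.
  apply: (@continuous_comp _ _ _ (fun x => nF (F x)) (@Num.sqrt RR)).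
    apply: (@continuous_comp _ _ _ F nF); first exact: Fcont.
    exact: nFcont.
  exact: sqrt_continuous.
- move=> x /nF_pos np; rewrite /on_sphere.
  under eq_bigr do rewrite mxE exprMn.
  rewrite -mulr_sumr -/(nF (F x)) exprVn sqr_sqrtr ?nF_ge0 // mulVf //.
  by rewrite gt_eqF.
- move=> x _; rewrite /f Fnu nFN; exact: scalerN.
Qed.

Definition JF (N : nat) (ell : nat -> nat) (m : nat) (g : 'I_m -> nat) : nat :=
  head 0%N [seq j <- iota 1 N | (ell j <= #|[set t | g t == j]|)%N].

Lemma JF_spec N ell m (g : 'I_m -> nat) :
  (forall t, (1 <= g t <= N)%N) ->
  (forall j, (1 <= j <= N)%N -> (0 < ell j)%N) ->
  (\sum_(1 <= j < N.+1) ell j + 1 = m + N)%N ->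
  (1 <= JF N ell g <= N)%N /\ (ell (JF N ell g) <= #|[set t | g t == JF N ell g]|)%N.
Proof.
move=> gN ellp hs.
rewrite /JF; set s := [seq j <- _ | _].
case E: s => [|j0 s'] /=; last first.
  have : j0 \in s by rewrite E mem_head.
  rewrite mem_filter mem_iota => /andP[-> /andP[j1 jN]]; split => //.
  by rewrite j1 /=; move: jN; rewrite addnC addn1 ltnS.
exfalso.
have hn : ~~ has (fun j => (ell j <= #|[set t | g t == j]|)%N) (iota 1 N).
  by rewrite has_filter -/s E.
have lt j : (1 <= j <= N)%N -> (#|[set t | g t == j]| < ell j)%N.
  move=> jr; rewrite ltnNge; apply: contra hn => h; apply/hasP; exists j => //.
  by rewrite mem_iota; lia.
have m_le : (m <= \sum_(1 <= j < N.+1) #|[set t | g t == j]|)%N.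
  apply: (@leq_trans (\sum_(t : 'I_m) 1)%N); first by rewrite sum1_card card_ord.
  have -> : (\sum_(1 <= j < N.+1) #|[set t | g t == j]| =
            \sum_(1 <= j < N.+1) \sum_(t : 'I_m) (g t == j))%N.
    apply: eq_bigr => j _; rewrite -sum1_card big_mkcond /=.
    by apply: eq_bigr => t _; rewrite inE; case: (_ == _).
  rewrite exchange_big /=; apply: leq_sum => t _.
  rewrite (bigD1_seq (g t)) /= ?iota_uniq ?eqxx ?leq_addr //.
  by rewrite mem_index_iota; have := gN t; lia.
have : (\sum_(1 <= j < N.+1) #|[set t | g t == j]| + N <= \sum_(1 <= j < N.+1) ell j)%N.
  have NS : (\sum_(1 <= j < N.+1) 1 = N)%N.
    by rewrite sum_nat_const_nat muln1 subn1.
  have H : (\sum_(1 <= j < N.+1) (#|[set t | g t == j]| + 1) <= \sum_(1 <= j < N.+1) ell j)%N.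
    rewrite big_nat_cond [X in (_ <= X)%N]big_nat_cond.
    apply: leq_sum => j /andP[jr _]; rewrite addn1; apply: lt; lia.
  by rewrite big_split /= NS in H.
lia.
Qed.

Lemma int_abs_cases (z : int) (j : nat) : absz z = j -> z = j%:Z \/ z = - j%:Z.
Proof. lia. Qed.

Lemma Lam_opp (z q : int) : z != 0 ->
  (if - z < 0 then - q else q) = - (if z < 0 then - q else q).
Proof.
move=> z0; case: ifP => h1; case: ifP => h2; rewrite ?opprK //; lia.
Qed.

Lemma sum0_sign (a b : int) : a != 0 -> a + b = 0 -> (a < 0) = ~~ (b < 0).
Proof.
move=> a0 h; have -> : b = - a by apply/eqP; rewrite -addr_eq0 addrC h.
by case h1: (a < 0); case h2: (- a < 0) => //=; lia.
Qed.

Lemma neg_sign (a : int) : a != 0 -> (- a < 0) = ~~ (a < 0).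
Proof. by move=> a0; case h1: (a < 0); case h2: (- a < 0) => //=; lia. Qed.

Lemma opp_of_abs (x y : int) : absz x = absz y -> (x < 0) = ~~ (y < 0) -> x + y = 0.
Proof.
move=> h1 h2; apply: abs_opp_sum => //; by rewrite h2; case: (y < 0).
Qed.

Lemma sign_val (z : int) (j k : nat) : absz z = j -> (z < 0) = ~~ odd k ->
  z = (-1) ^+ k.+1 * j%:Z.
Proof.
move=> h1 h2; rewrite -signr_odd /=; case: (odd k) h2 => /= h2.
  by rewrite expr0 mul1r; move/negbT: h2 => h2; lia.
by rewrite expr1 mulN1r; lia.
Qed.

Unset Implicit Arguments.

Theorem theorem3p5 (p : nat) (K : {set {set 'I_p}}) (nu : 'I_p -> 'I_p)
  (n m N : nat) (lam : 'I_m -> 'I_p -> int) (ell : nat -> nat) :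
  simplicial_complex K ->
  free_Z2_action K nu ->
  Z2_index_is_pred K nu n ->
  (forall t, fan_labeling K nu (lam t)) ->
  (forall t v, (absz (lam t v) <= N)%N) ->
  (forall j, (1 <= j <= N)%N -> (0 < ell j)%N) ->
  (\sum_(1 <= j < N.+1) ell j + 1 = m + N)%N ->
  exists (v : 'I_n -> 'I_p) (jj : 'I_n -> nat) (ii : 'I_n -> 'I_m),
    injective v /\
        [set v k | k : 'I_n] \in K /\
        (forall k : 'I_n, (1 <= jj k <= N)%N) /\
        (forall k k' : 'I_n, (k <= k')%N -> (jj k <= jj k')%N) /\
        (forall k : 'I_n, lam (ii k) (v k) = (-1) ^+ k.+1 * (jj k)%:Z) /\
        (forall k k' : 'I_n, k'.+1 = k -> jj k' = jj k -> (ii k' < ii k)%N) /\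
        (forall k : 'I_n,
           (ell (jj k) <= #|[set t : 'I_m | [exists q : 'I_n,
               (lam t (v q) == (jj k)%:Z) || (lam t (v q) == - (jj k)%:Z)]]|)%N).
Proof.
move=> sc fr [ind1 ind2] fan bnd ellp hs.
have [sc0 [scd scv]] := sc; have [nuK [nuS nufree]] := fr.
case: n ind1 ind2 => [|d] ind1 ind2.
  have e0 : 'I_0 -> False by case.
  exists (fun k => match e0 k with end), (fun _ => 0%N), (fun k => match e0 k with end).
  split; first by move=> k; case: (e0 k).
  split; last by do ![split]; move=> k; case: (e0 k).
  rewrite (_ : [set _ | _ in _] = finset.set0) //.
  by apply/setP => y; rewrite inE; apply/imsetP => -[k]; case: (e0 k).
have mpos : (0 < m)%N.
  have : (N <= \sum_(1 <= j < N.+1) ell j)%N.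
    have NS : (\sum_(1 <= j < N.+1) 1 = N)%N.
      by rewrite sum_nat_const_nat muln1 subn1.
    rewrite -[X in (X <= _)%N]NS big_nat_cond [X in (_ <= X)%N]big_nat_cond.
    by apply: leq_sum => j /andP[jr _]; apply: ellp; lia.
  lia.
pose t0 := Ordinal mpos.
pose g v := fun t : 'I_m => absz (lam t v).
pose jf v := JF N ell (g v).
pose ifn v : 'I_m := odflt t0 [pick t | g v t == jf v].
pose pos v := (jf v * m + ifn v)%N.
pose Lam v : int := if lam (ifn v) v < 0 then - (pos v)%:Z else (pos v)%:Z.
have lamnz t v : lam t v != 0 := (fan t).1 v.
have gN v t : (1 <= g v t <= N)%N.
  by rewrite /g bnd andbT absz_gt0.
have J v := JF_spec (gN v) ellp hs.
have Iv v : g v (ifn v) = jf v.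
  rewrite /ifn; case: pickP => [t /eqP //|none].
  have [jr hc] := J v.
  have := ellp _ jr.
  move: hc; rewrite (_ : [set t | g v t == JF N ell (g v)] = finset.set0) ?cards0.
    by rewrite leqn0 => /eqP ->.
  by apply/setP => t; rewrite !inE none.
have gnu v : g (nu v) = g v.
  by apply/funext => t; rewrite /g (fan t).2.2 abszN.
have jfnu v : jf (nu v) = jf v by rewrite /jf gnu.
have ifnu v : ifn (nu v) = ifn v by rewrite /ifn jfnu gnu.
have posnu v : pos (nu v) = pos v by rewrite /pos jfnu ifnu.
have pospos v : (0 < pos v)%N.
  have [jr _] := J v; rewrite /pos addn_gt0 muln_gt0 mpos andbT.
  by move: jr => /andP[-> _].
have Lnu v : Lam (nu v) = - Lam v.
  by rewrite /Lam posnu ifnu (fan _).2.2 Lam_opp.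
have absL v : absz (Lam v) = pos v by rewrite /Lam; case: ifP => _; rewrite ?abszN.
have Lnz v : Lam v != 0 by rewrite -absz_gt0 absL.
have Lneg v : (Lam v < 0) = (lam (ifn v) v < 0).
  rewrite /Lam; case: ifP => h; have := pospos v; lia.
have ifnlt v : (ifn v < m)%N by [].
have posdiv v : (pos v %/ m = jf v)%N by rewrite /pos divnMDl // divn_small // addn0.
have posmod v : (pos v %% m = ifn v)%N by rewrite /pos modnMDl modn_small.
have Lcons s : s \in K -> forall u v, u \in s -> v \in s -> Lam u + Lam v != 0.
  move=> sK u v us vs; apply/negP => /eqP h.
  have [uv|uv] := eqVneq u v.
    by move: h; rewrite uv; have := Lnz v; lia.
  have pe : pos u = pos v.
    have e : Lam u = - Lam v by lia.
    by rewrite -absL -(absL v) e abszN.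
  have je : jf u = jf v by rewrite -posdiv pe posdiv.
  have ie : ifn u = ifn v by apply: val_inj; rewrite /= -posmod pe posmod.
  have uvK : [set u; v] \in K.
    apply: (scd s _ sK); apply/fintype.subsetP => z; rewrite !inE.
    by case/orP => /eqP ->.
  have := (fan (ifn u)).2.1 u v uv uvK; apply/negP/negPn/eqP.
  apply: opp_of_abs.
    by have := Iv u; have := Iv v; rewrite /g -ie je => -> ->.
  by rewrite -Lneg ie -Lneg; apply: sum0_sign.
have build : forall s x l', s \in K -> all (mem s) (x :: l') ->
    sorted (altr Lam) (x :: l') -> size l' = d -> Lam x < 0 ->
  exists (v : 'I_d.+1 -> 'I_p) (jj : 'I_d.+1 -> nat) (ii : 'I_d.+1 -> 'I_m),
    injective v /\
        [set v k | k : 'I_d.+1] \in K /\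
        (forall k : 'I_d.+1, (1 <= jj k <= N)%N) /\
        (forall k k' : 'I_d.+1, (k <= k')%N -> (jj k <= jj k')%N) /\
        (forall k : 'I_d.+1, lam (ii k) (v k) = (-1) ^+ k.+1 * (jj k)%:Z) /\
        (forall k k' : 'I_d.+1, k'.+1 = k -> jj k' = jj k -> (ii k' < ii k)%N) /\
        (forall k : 'I_d.+1,
           (ell (jj k) <= #|[set t : 'I_m | [exists q : 'I_d.+1,
               (lam t (v q) == (jj k)%:Z) || (lam t (v q) == - (jj k)%:Z)]]|)%N).
  move=> s x l' sK alls sorts szl xn.
  pose v (k : 'I_d.+1) := nth x (x :: l') k.
  have vin k : v k \in s.
    by apply: (allP alls); rewrite /v mem_nth //= szl.
  have par k : (k < d.+1)%N -> (Lam (nth x (x :: l') k) < 0) = ~~ odd k.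
    elim: k => [|k IH] kd; first by rewrite /= xn.
    have := (sortedP x sorts) k; rewrite /= szl => /(_ kd).
    rewrite /altr => /andP[_ h]; rewrite negbK.
    by move: h; rewrite (IH (ltnW kd)); case: (odd k); case: (Lam _ < 0).
  have posinc i j : (i < d.+1)%N -> (j < d.+1)%N -> (i < j)%N ->
      (pos (nth x (x :: l') i) < pos (nth x (x :: l') j))%N.
    move=> id jd ij.
    have tr : transitive (relpre pos ltn).
      by move=> b a c; rewrite /relpre /=; apply: ltn_trans.
    have sp : sorted (relpre pos ltn) (x :: l').
      apply: sub_sorted sorts => a b; rewrite /altr /relpre /= !absL.
      by case/andP.
    by apply: (sorted_ltn_nth tr x sp); rewrite ?inE /= ?szl.
  exists v, (fun k => jf (v k)), (fun k => ifn (v k)).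
  split.
    move=> i j e; apply: val_inj; case: (ltngtP i j) => // h.
      by have := posinc _ _ (ltn_ord i) (ltn_ord j) h; rewrite -/(v i) -/(v j) e ltnn.
    by have := posinc _ _ (ltn_ord j) (ltn_ord i) h; rewrite -/(v i) -/(v j) e ltnn.
  split.
    apply: (scd s _ sK); apply/fintype.subsetP => z /imsetP [k _ ->]; exact: vin.
  split; first by move=> k; case: (J (v k)).
  split.
    move=> k k' kk; case: (ltngtP k k') => h.
    - rewrite -!posdiv; apply: leq_div2r; apply: ltnW.
      exact: (posinc _ _ (ltn_ord k) (ltn_ord k') h).
    - by rewrite leqNgt h in kk.
    - by rewrite (val_inj h).
  split.
    move=> k; apply: sign_val; first by have := Iv (v k).
    by rewrite -Lneg /v par.
  split.
    move=> k k' kk jeq.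
    have kl : (k' < k)%N by rewrite -kk.
    have := posinc _ _ (ltn_ord k') (ltn_ord k) kl.
    by rewrite -/(v k') -/(v k) /pos jeq ltn_add2l.
  move=> k; apply: (leq_trans (J (v k)).2); apply: subset_leq_card.
  apply/fintype.subsetP => t; rewrite !inE => /eqP gt; apply/existsP; exists k.
  by case: (int_abs_cases gt) => ->; rewrite eqxx ?orbT.
case: (pselect (exists s l, s \in K /\ all (mem s) l /\ sorted (altr Lam) l /\
                 (d < size l)%N)) => [[s [l [sK [ls [lsort lsz]]]]] | none]; last first.
  exfalso; apply: (ind2 d (ltnSn d)); apply: (sphere_map nuK Lnu Lcons).
  move=> s sK l ls lsort; rewrite leqNgt; apply/negP => lsz.
  by apply: none; exists s, l.
have szt : size (take d.+1 l) = d.+1 by rewrite size_takel.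
have allt : all (mem s) (take d.+1 l).
  by apply/allP => z /mem_take zl; exact: (allP ls z zl).
have sortt : sorted (altr Lam) (take d.+1 l) by apply: take_sorted.
move: szt allt sortt; case: (take d.+1 l) => [//|x l'] /= [szl] allt sortt.
case: (boolP (Lam x < 0)) => xn; first exact: (build s x l').
apply: (build [set nu z | z in s] (nu x) (map nu l')); first exact: nuS.
- rewrite -(map_cons nu x l'); apply/allP => z /mapP [y yin ->].
  have allt' : all (mem s) (x :: l') := allt.
  by apply: imset_f; exact: (allP allt' y yin).
- have sortt' : sorted (altr Lam) (x :: l') := sortt.
  rewrite -(map_cons nu x l') sorted_map; apply: sub_sorted sortt' => u w.
  rewrite /altr /= !Lnu !abszN !neg_sign // => /andP[-> h] /=.
  by move: h; case: (Lam u < 0); case: (Lam w < 0).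
- by rewrite size_map.
- by rewrite Lnu; have := Lnz x; move: xn; lia.
Qed.
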